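(* With the notation of the context, assume that $L$ is nonresonant in $X_{N,T}$, $X_{D,T}$, $X_{M_1,T}$ and $X_{M_2,T}$, that $\widetilde L$ is nonresonant in $X_{N,2T}$ and $X_{D,2T}$, and that $\widetilde{\widetilde L}$ is nonresonant in $X_{P,4T}$. Then for all $(t,s)\in I\times I$, \[G_P[4T](t,s)=\tfrac14\big(G_N[T](t,s)+G_D[T](t,s)+G_{M_1}[T](t,s)+G_{M_2}[T](t,s)\big).\]
   Context: Fix $n\ge 1$, $T>0$, $I=[0,T]$, $J=[0,2T]$. $W^{2n,1}(K)$: $u\in C^{2n-1}(K)$ with $u^{(2n-1)}$ absolutely continuous. Let $a_0,\dots,a_{2n-1}\in L^{\alpha}(I)$, $\alpha\ge1$, $Lu=u^{(2n)}+\sum_{k=0}^{2n-1}a_ku^{(k)}$ on $I$. $\widetilde L u=u^{(2n)}+\sum_{k=0}^{n-1}(\hat a_{2k+1}u^{(2k+1)}+\tilde a_{2k}u^{(2k)})$ on $J$, where $\tilde a_{2k}=a_{2k}$, $\hat a_{2k+1}=a_{2k+1}$ on $I$, and $\tilde a_{2k}(t)=a_{2k}(2T-t)$, $\hat a_{2k+1}(t)=-a_{2k+1}(2T-t)$ for $t\in(T,2T]$; $\widetilde{\widetilde L}$ on $[0,4T]$ is obtained by the same construction from $\widetilde L$ (reflection about $2T$). Nonresonance of $M$ in $X$: $Mu=0$ a.e., $u\in X$ implies $u\equiv0$; the Green's function $G$ then gives the unique solution $u(t)=\int G(t,s)\sigma(s)ds$ of $Mu=\sigma$, $u\in X$. Spaces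 ($k=0,\dots,n-1$ unless stated): $X_{N,T}$: $u^{(2k+1)}(0)=u^{(2k+1)}(T)=0$; $X_{D,T}$: $u^{(2k)}(0)=u^{(2k)}(T)=0$; $X_{M_1,T}$: $u^{(2k+1)}(0)=u^{(2k)}(T)=0$; $X_{M_2,T}$: $u^{(2k)}(0)=u^{(2k+1)}(T)=0$ (all in $W^{2n,1}(I)$); $X_{N,2T}$, $X_{D,2T}$: the analogous Neumann/Dirichlet conditions at $0$ and $2T$ in $W^{2n,1}(J)$; $X_{P,4T}=\{u\in W^{2n,1}([0,4T]): u^{(k)}(0)=u^{(k)}(4T),\ k=0,\dots,2n-1\}$. $G_N[T],G_D[T],G_{M_1}[T],G_{M_2}[T]$ are the Green's functions of $L$ on $X_{N,T},X_{D,T},X_{M_1,T},X_{M_2,T}$, and $G_P[4T]$ that of $\widetilde{\widetilde L}$ on $X_{P,4T}$. *)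

(* Defs.v *)
From HB Require Import structures.
From mathcomp Require Import all_boot all_order all_algebra.
From mathcomp Require Import all_classical all_reals all_analysis.
Set Implicit Arguments. Unset Strict Implicit. Unset Printing Implicit Defensive.
Import Order.TTheory GRing.Theory Num.Theory.
Import numFieldNormedType.Exports.
Local Open Scope classical_set_scope.
Local Open Scope ring_scope.

Section Defs.
Variable R : realType.

Definition Icc (a b : R) : set R := [set x | a <= x <= b].

(** [f] has derivative [l] at [t] relative to the set [K]
    (one-sided at the endpoints of an interval). *)
Definition has_deriv_within (K : set R) (f : R -> R) (t l : R) : Prop :=
  (fun h : R => h^-1 * (f (t + h) - f t)) @
     within [set h | h != 0 /\ K (t + h)] (nbhs (0 : R)) --> l.

Definition deriv_chain (K : set R) (m : nat) (u : R -> R)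
    (d : nat -> R -> R) : Prop :=
  (forall t, K t -> d 0%N t = u t) /\
  forall k, (k < m)%N -> forall t, K t -> has_deriv_within K (d k) t (d k.+1 t).

Definition abs_cont (a b : R) (f : R -> R) : Prop :=
  forall e : R, 0 < e -> exists2 del : R, 0 < del &
    forall (N : nat) (x y : 'I_N -> R),
      (forall i, a <= x i /\ x i <= y i /\ y i <= b) ->
      (forall i j, i != j -> y i <= x j \/ y j <= x i) ->
      \sum_(i < N) (y i - x i) < del ->
      \sum_(i < N) `|f (y i) - f (x i)| < e.

(** u ∈ W^{2n,1}([a,b]) with derivatives d 0 = u, ..., d (2n-1):
    u ∈ C^{2n-1}([a,b]) and u^(2n-1) absolutely continuous. *)
Definition W2n1 (a b : R) (n : nat) (u : R -> R) (d : nat -> R -> R) : Prop :=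
  deriv_chain (Icc a b) (n.*2).-1 u d /\ {within Icc a b, continuous (d (n.*2).-1)}
  /\ abs_cont a b (d (n.*2).-1).

Definition solves (a b : R) (n : nat) (c : nat -> R -> R) (d : nat -> R -> R)
    (sigma : R -> R) : Prop :=
  {ae (@lebesgue_measure R), forall t, Icc a b t ->
     exists v : R, is_derive t 1 (d (n.*2).-1) v /\
       v + \sum_(k < n.*2) c k t * d k t = sigma t}.

Definition BC_N (a b : R) (n : nat) (d : nat -> R -> R) : Prop :=
  forall k, (k < n)%N -> d k.*2.+1 a = 0 /\ d k.*2.+1 b = 0.
Definition BC_D (a b : R) (n : nat) (d : nat -> R -> R) : Prop :=
  forall k, (k < n)%N -> d k.*2 a = 0 /\ d k.*2 b = 0.
Definition BC_M1 (a b : R) (n : nat) (d : nat -> R -> R) : Prop :=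
  forall k, (k < n)%N -> d k.*2.+1 a = 0 /\ d k.*2 b = 0.
Definition BC_M2 (a b : R) (n : nat) (d : nat -> R -> R) : Prop :=
  forall k, (k < n)%N -> d k.*2 a = 0 /\ d k.*2.+1 b = 0.
Definition BC_P (a b : R) (n : nat) (d : nat -> R -> R) : Prop :=
  forall k, (k < n.*2)%N -> d k a = d k b.

Definition nonresonant (a b : R) (n : nat) (c : nat -> R -> R)
    (BC : R -> R -> nat -> (nat -> R -> R) -> Prop) : Prop :=
  forall (u : R -> R) (d : nat -> R -> R),
    W2n1 a b n u d -> BC a b n d -> solves a b n c d (fun _ => 0) ->
    forall t, Icc a b t -> u t = 0.

Definition is_green (a b : R) (n : nat) (c : nat -> R -> R)
    (BC : R -> R -> nat -> (nat -> R -> R) -> Prop) (G : R -> R -> R) : Prop :=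
  {within [set p : R * R | Icc a b p.1 /\ Icc a b p.2],
     continuous (fun p : R * R => G p.1 p.2)} /\
  forall sigma : R -> R,
    (@lebesgue_measure R).-integrable (Icc a b) (EFin \o sigma) ->
    exists d : nat -> R -> R,
      W2n1 a b n (fun t => \int[@lebesgue_measure R]_(s in Icc a b) (G t s * sigma s)) d
      /\ BC a b n d /\ solves a b n c d sigma.

Definition Lalpha (a b alpha : R) (f : R -> R) : Prop :=
  measurable_fun (Icc a b) f /\
  (\int[@lebesgue_measure R]_(x in Icc a b) ((`|f x| `^ alpha)%:E) < +oo)%E.

(** Reflection of the coefficients about T (construction of \tilde L):
    c~_k(t) = c_k(t) for t <= T, (-1)^k c_k(2T - t) for t > T. *)
Definition refl (T : R) (c : nat -> R -> R) : nat -> R -> R :=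
  fun k t => if t <= T then c k t else (-1) ^+ k * c k (2 * T - t).

End Defs.

(* Main.v *)
Require Import Defs.
From HB Require Import structures.
From mathcomp Require Import all_boot all_order all_algebra.
From mathcomp Require Import all_classical all_reals all_analysis.
Import Order.TTheory GRing.Theory Num.Theory.
Import numFieldNormedType.Exports.
Local Open Scope classical_set_scope.
Local Open Scope ring_scope.
From mathcomp Require Import ring lra.

Section S.
Context {R : realType}.
Implicit Types (K : set R) (f g : R -> R) (t l c : R).

Lemma hdP K f t l : has_deriv_within K f t l <->
  (forall e : R, 0 < e -> exists2 del : R, 0 < del & forall h : R, h != 0 -> K (t + h) -> `|h| < del ->
     `|h^-1 * (f (t + h) - f t) - l| < e).
Proof.
rewrite /has_deriv_within cvgrPdistC_lt; split => H e e0.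
  have := H e e0; rewrite near_withinE => /nbhs_normP [d d0 Hd].
  exists d => // h h0 Kh hd; apply: (Hd h) => //=.
  by rewrite /ball_ /= sub0r normrN.
have [d d0 Hd] := H e e0; rewrite near_withinE; apply/nbhs_normP; exists d => //= h.
rewrite /ball_ /= sub0r normrN => hd [h0 Kh]; exact: Hd.
Qed.

Lemma hd_loc K f g t l : K t -> (forall x, K x -> f x = g x) ->
  has_deriv_within K g t l -> has_deriv_within K f t l.
Proof.
move=> Kt fg /hdP H; apply/hdP => e e0; have [d d0 Hd] := H e e0.
by exists d => // h h0 Kh hd; rewrite !fg //; exact: Hd.
Qed.

Lemma hd_sub K K' f t l : K' `<=` K ->
  has_deriv_within K f t l -> has_deriv_within K' f t l.
Proof.
move=> KK /hdP H; apply/hdP => e e0; have [d d0 Hd] := H e e0.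
by exists d => // h h0 Kh hd; apply: Hd => //; exact: KK.
Qed.

Lemma hd_U K1 K2 f t l : has_deriv_within K1 f t l -> has_deriv_within K2 f t l ->
  has_deriv_within (K1 `|` K2) f t l.
Proof.
move=> /hdP H1 /hdP H2; apply/hdP => e e0.
have [d1 d10 Hd1] := H1 e e0; have [d2 d20 Hd2] := H2 e e0.
exists (Num.min d1 d2); first by rewrite lt_min d10 d20.
move=> h h0 [Kh|Kh]; rewrite lt_min => /andP[h1 h2]; [exact: Hd1|exact: Hd2].
Qed.

Lemma hd_out p q f t l : t < p \/ q < t -> has_deriv_within (Icc p q) f t l.
Proof.
move=> H; apply/hdP => e e0.
have [d d0 Hd] : exists2 d : R, 0 < d & forall h, `|h| < d -> ~ Icc p q (t + h).
  case: H => H.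
    exists (p - t); first by rewrite subr_gt0.
    move=> h /ltr_normlP [_ hd] [/andP [ph _]]; move: hd ph; rewrite ltrBrDl; lra.
  exists (t - q); first by rewrite subr_gt0.
  move=> h /ltr_normlP [hd _] [/andP [_ ph]]; move: hd ph; lra.
by exists d => // h _ Kh hd; exfalso; exact: (Hd h hd Kh).
Qed.

Lemma hd_refl K g t l c : has_deriv_within K g t l ->
  has_deriv_within [set x | K (c - x)] (fun x => g (c - x)) (c - t) (- l).
Proof.
move=> /hdP H; apply/hdP => e e0; have [d d0 Hd] := H e e0.
exists d => // h h0 Kh hd.
have E : c - (c - t + h) = t + (- h) by ring.
have E2 : c - (c - t) = t by ring.
move: Kh; rewrite /= E E2 => Kh.
have := Hd (- h); rewrite oppr_eq0 normrN => /(_ h0 Kh hd).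
have -> : (- h)^-1 * (g (t + - h) - g t) - l = - (h^-1 * (g (t + - h) - g t) - - l).
  by rewrite invrN; ring.
by rewrite normrN.
Qed.

Lemma hd_shift K g t l c : has_deriv_within K g t l ->
  has_deriv_within [set x | K (x - c)] (fun x => g (x - c)) (t + c) l.
Proof.
move=> /hdP H; apply/hdP => e e0; have [d d0 Hd] := H e e0.
exists d => // h h0 Kh hd.
have E : t + c + h - c = t + h by ring.
have E2 : t + c - c = t by ring.
move: Kh; rewrite /= E E2 => Kh; exact: Hd.
Qed.

Lemma hd_add K f g t l1 l2 : has_deriv_within K f t l1 -> has_deriv_within K g t l2 ->
  has_deriv_within K (fun x => f x + g x) t (l1 + l2).
Proof.
move=> /hdP H1 /hdP H2; apply/hdP => e e0.
have e20 : 0 < e / 2 by rewrite divr_gt0.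
have [d1 d10 Hd1] := H1 _ e20; have [d2 d20 Hd2] := H2 _ e20.
exists (Num.min d1 d2); first by rewrite lt_min d10 d20.
move=> h h0 Kh; rewrite lt_min => /andP[h1 h2].
have := Hd1 h h0 Kh h1; have := Hd2 h h0 Kh h2.
set A := h^-1 * (f _ - _) - l1; set B := h^-1 * (g _ - _) - l2 => hB hA.
have -> : h^-1 * (f (t + h) + g (t + h) - (f t + g t)) - (l1 + l2) = A + B.
  rewrite /A /B; ring.
apply: (le_lt_trans (ler_normD _ _)); lra.
Qed.

Lemma hd_scale K f t l (a : R) : has_deriv_within K f t l ->
  has_deriv_within K (fun x => a * f x) t (a * l).
Proof.
move=> /hdP H; apply/hdP => e e0.
have ea0 : 0 < e / (`|a| + 1) by rewrite divr_gt0 // ltr_wpDl.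
have [d d0 Hd] := H _ ea0; exists d => // h h0 Kh hd.
have -> : h^-1 * (a * f (t + h) - a * f t) - a * l = a * (h^-1 * (f (t + h) - f t) - l).
  ring.
rewrite normrM; have := Hd h h0 Kh hd.
move: (h^-1 * (f (t + h) - f t) - l) => X HX.
have X0 : 0 <= `|X| by exact: normr_ge0.
have a0 : 0 <= `|a| by exact: normr_ge0.
have : `|X| * (`|a| + 1) < e.
  by rewrite -ltr_pdivlMr ?ltr_wpDl.
nra.
Qed.
Lemma ac_loc a b f g : (forall x, Icc a b x -> f x = g x) -> abs_cont a b g -> abs_cont a b f.
Proof.
move=> fg H e e0; have [d d0 Hd] := H e e0; exists d => // N x y Hxy Hdis Hs.
have K1 i : Icc a b (x i) by case: (Hxy i) => h1 [h2 h3]; rewrite /Icc /= h1 /=; apply: (le_trans h2 h3).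
have K2 i : Icc a b (y i) by case: (Hxy i) => h1 [h2 h3]; rewrite /Icc /= h3 andbT; apply: (le_trans h1 h2).
under eq_bigr => i _ do rewrite !fg //.
exact: Hd.
Qed.

Lemma ac_add a b f g : abs_cont a b f -> abs_cont a b g -> abs_cont a b (fun x => f x + g x).
Proof.
move=> H1 H2 e e0.
have e20 : 0 < e / 2 by rewrite divr_gt0.
have [d1 d10 Hd1] := H1 _ e20; have [d2 d20 Hd2] := H2 _ e20.
exists (Num.min d1 d2); first by rewrite lt_min d10 d20.
move=> N x y Hxy Hdis; rewrite lt_min => /andP[s1 s2].
have := Hd1 N x y Hxy Hdis s1; have := Hd2 N x y Hxy Hdis s2 => h2 h1.
apply: (le_lt_trans (y := \sum_(i < N) (`|f (y i) - f (x i)| + `|g (y i) - g (x i)|))).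
  apply: ler_sum => i _.
  have -> : f (y i) + g (y i) - (f (x i) + g (x i)) = (f (y i) - f (x i)) + (g (y i) - g (x i)) by ring.
  exact: ler_normD.
rewrite big_split /=; lra.
Qed.

Lemma ac_refl a b g c : abs_cont a b g -> abs_cont (c - b) (c - a) (fun x => g (c - x)).
Proof.
move=> H e e0; have [d d0 Hd] := H e e0; exists d => // N x y Hxy Hdis Hs.
under eq_bigr => i _ do rewrite distrC.
apply: (Hd N (fun i => c - y i) (fun i => c - x i)).
- move=> i; case: (Hxy i) => h1 [h2 h3]; lra.
- move=> i j /Hdis; lra.
- rewrite (eq_bigr (fun i => y i - x i)) // => i _; ring.
Qed.

Lemma ac_shift a b g c : abs_cont a b g -> abs_cont (a + c) (b + c) (fun x => g (x - c)).
Proof.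
move=> H e e0; have [d d0 Hd] := H e e0; exists d => // N x y Hxy Hdis Hs.
apply: (Hd N (fun i => x i - c) (fun i => y i - c)).
- move=> i; case: (Hxy i) => h1 [h2 h3]; lra.
- move=> i j /Hdis; lra.
- rewrite (eq_bigr (fun i => y i - x i)) // => i _; ring.
Qed.
Lemma ac_scale a b f (k : R) : abs_cont a b f -> abs_cont a b (fun x => k * f x).
Proof.
move=> H e e0.
have ea0 : 0 < e / (`|k| + 1) by rewrite divr_gt0 // ltr_wpDl.
have [d d0 Hd] := H _ ea0; exists d => // N x y Hxy Hdis Hs.
have := Hd N x y Hxy Hdis Hs => HX.
under eq_bigr => i _ do rewrite -mulrBr normrM.
rewrite -mulr_sumr.
have X0 : 0 <= \sum_(i < N) `|f (y i) - f (x i)| by apply: sumr_ge0 => i _.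
move: (\sum_(i < N) _) HX X0 => X HX X0.
have X0' : 0 <= `|k| by exact: normr_ge0.
have : X * (`|k| + 1) < e by rewrite -ltr_pdivlMr ?ltr_wpDl.
nra.
Qed.

Lemma minmax_split f x y q : x <= y ->
  f y - f x = (f (Num.min y q) - f (Num.min x q)) + (f (Num.max y q) - f (Num.max x q)).
Proof.
move=> xy; rewrite !minEle !maxEle.
by case: (leP y q) => yq; case: (leP x q) => xq; first [ring | lra].
Qed.

Lemma mm_facts (a q b x y : R) : a <= q -> q <= b -> a <= x -> x <= y -> y <= b ->
  [/\ Num.min y q - Num.min x q <= y - x, Num.max y q - Num.max x q <= y - x,
   a <= Num.min x q /\ Num.min x q <= Num.min y q /\ Num.min y q <= q &
   q <= Num.max x q /\ Num.max x q <= Num.max y q /\ Num.max y q <= b].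
Proof.
move=> aq qb h1 h2 h3; rewrite !minEle !maxEle.
case: (leP y q); case: (leP x q); move=> *; split; lra.
Qed.

Lemma mm_mono (y x q : R) : y <= x -> Num.min y q <= Num.min x q /\ Num.max y q <= Num.max x q.
Proof. by move=> h; rewrite !minEle !maxEle; case: (leP y q); case: (leP x q); move=> *; split; lra. Qed.

Lemma ac_glue a q b f : a <= q -> q <= b -> abs_cont a q f -> abs_cont q b f -> abs_cont a b f.
Proof.
move=> aq qb H1 H2 e e0.
have e20 : 0 < e / 2 by rewrite divr_gt0.
have [d1 d10 Hd1] := H1 _ e20; have [d2 d20 Hd2] := H2 _ e20.
exists (Num.min d1 d2); first by rewrite lt_min d10 d20.
move=> N x y Hxy Hdis; rewrite lt_min => /andP[s1 s2].
have F : forall i, [/\ Num.min (y i) q - Num.min (x i) q <= y i - x i, Num.max (y i) q - Num.max (x i) q <= y i - x i,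
   a <= Num.min (x i) q /\ Num.min (x i) q <= Num.min (y i) q /\ Num.min (y i) q <= q &
   q <= Num.max (x i) q /\ Num.max (x i) q <= Num.max (y i) q /\ Num.max (y i) q <= b].
  by move=> i; case: (Hxy i) => h1 [h2 h3]; exact: mm_facts.
have C1 : \sum_(i < N) `|f (Num.min (y i) q) - f (Num.min (x i) q)| < e / 2.
  apply: (Hd1 N (fun i => Num.min (x i) q) (fun i => Num.min (y i) q)).
  - by move=> i; case: (F i).
  - by move=> i j /Hdis [h|h]; [left|right]; exact: (mm_mono _ _ q h).1.
  - by apply: le_lt_trans s1; apply: ler_sum => i _; case: (F i).
have C2 : \sum_(i < N) `|f (Num.max (y i) q) - f (Num.max (x i) q)| < e / 2.
  apply: (Hd2 N (fun i => Num.max (x i) q) (fun i => Num.max (y i) q)).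
  - by move=> i; case: (F i).
  - by move=> i j /Hdis [h|h]; [left|right]; exact: (mm_mono _ _ q h).2.
  - by apply: le_lt_trans s2; apply: ler_sum => i _; case: (F i).
apply: (le_lt_trans (y := \sum_(i < N) (`|f (Num.min (y i) q) - f (Num.min (x i) q)| +
   `|f (Num.max (y i) q) - f (Num.max (x i) q)|))).
  apply: ler_sum => i _; case: (Hxy i) => h1 [h2 h3].
  rewrite (minmax_split f _ _ q h2); exact: ler_normD.
rewrite big_split /=; lra.
Qed.

Lemma mm2 (a b x y d : R) : a <= x <= b -> a <= y <= b -> `|x - y| < d ->
  [/\ a <= Num.min x y /\ Num.min x y <= Num.max x y /\ Num.max x y <= b,
      Num.max x y - Num.min x y < d &
      forall f : R -> R, `|f x - f y| = `|f (Num.max x y) - f (Num.min x y)|].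
Proof.
rewrite !minEle !maxEle ltr_norml => /andP[h1 h2] /andP[h3 h4] /andP[h5 h6].
case: (leP x y) => xy; (split; [lra|lra|move=> f]) => //; by rewrite distrC.
Qed.

Lemma ac_cont a b f : abs_cont a b f -> {within Icc a b, continuous f}.
Proof.
move=> H; apply/subspace_continuousP => x Kx; apply/cvgrPdist_lt => e e0.
have [d d0 Hd] := H e e0; rewrite near_withinE; apply/nbhs_normP; exists d => //= y.
rewrite /ball_ /= /from_subspace => xy Ky.
have [c1 c3 c4] := mm2 _ _ _ _ _ Kx Ky xy.
have := Hd 1%N (fun _ => Num.min x y) (fun _ => Num.max x y) (fun _ => c1).
rewrite !big_ord1 c4; apply => //.
by move=> i j; rewrite (ord1 i) (ord1 j) eqxx.
Qed.

Lemma ae2 (P Q S : R -> Prop) : (forall t, P t -> Q t -> S t) -> {ae (@lebesgue_measure R), forall t, P t} -> {ae (@lebesgue_measure R), forall t, Q t} -> {ae (@lebesgue_measure R), forall t, S t}.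
Proof.
move=> H HP HQ.
have FF := ae_filter_ringOfSetsType (@lebesgue_measure R).
exact: (@filterS2 _ _ FF _ _ _ H HP HQ).
Qed.
Lemma ae1 (P S : R -> Prop) : (forall t, P t -> S t) -> {ae (@lebesgue_measure R), forall t, P t} -> {ae (@lebesgue_measure R), forall t, S t}.
Proof.
move=> H HP.
have FF := ae_filter_ringOfSetsType (@lebesgue_measure R).
exact: (@filterS _ _ FF _ _ H HP).
Qed.

Lemma W2n1_mk (a b : R) n u (d : nat -> R -> R) : deriv_chain (Icc a b) (n.*2).-1 u d -> abs_cont a b (d (n.*2).-1) ->
  W2n1 a b n u d.
Proof. by move=> H1 H2; split => //; split => //; exact: ac_cont. Qed.

Lemma W2n1_add (a b : R) n u1 u2 (d1 d2 : nat -> R -> R) : W2n1 a b n u1 d1 -> W2n1 a b n u2 d2 ->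
  W2n1 a b n (fun t => u1 t + u2 t) (fun k t => d1 k t + d2 k t).
Proof.
move=> [[H0 H1] [_ A1]] [[G0 G1] [_ A2]]; apply: W2n1_mk; last exact: ac_add.
split=> [t Kt|k kn t Kt]; first by rewrite H0 // G0.
exact: hd_add (H1 k kn t Kt) (G1 k kn t Kt).
Qed.

Lemma W2n1_scale (a b : R) n u (d : nat -> R -> R) (c : R) : W2n1 a b n u d ->
  W2n1 a b n (fun t => c * u t) (fun k t => c * d k t).
Proof.
move=> [[H0 H1] [_ A1]]; apply: W2n1_mk; last exact: ac_scale.
split=> [t Kt|k kn t Kt]; first by rewrite H0.
exact: hd_scale (H1 k kn t Kt).
Qed.

Lemma solves_add (a b : R) n (cf d1 d2 : nat -> R -> R) (s1 s2 : R -> R) : solves a b n cf d1 s1 -> solves a b n cf d2 s2 ->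
  solves a b n cf (fun k t => d1 k t + d2 k t) (fun t => s1 t + s2 t).
Proof.
move=> H1 H2; apply: ae2 H1 H2 => t P1 P2 Kt.
have [v1 [D1 E1]] := P1 Kt; have [v2 [D2 E2]] := P2 Kt.
exists (v1 + v2); split; first exact: is_deriveD.
rewrite -E1 -E2 (eq_bigr (fun i : 'I_(n.*2) => cf i t * d1 i t + cf i t * d2 i t)); last by move=> i _; ring.
rewrite big_split /=; ring.
Qed.

Lemma solves_scale (a b : R) n (cf d : nat -> R -> R) (s : R -> R) (k : R) : solves a b n cf d s ->
  solves a b n cf (fun j t => k * d j t) (fun t => k * s t).
Proof.
move=> H1; apply: ae1 H1 => t P1 Kt.
have [v1 [D1 E1]] := P1 Kt.
exists (k * v1); split; first exact: is_deriveZ.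
rewrite -E1 mulrDr mulr_sumr; congr (_ + _); apply: eq_bigr => i _; ring.
Qed.

Lemma hd_refl' K g t l c : has_deriv_within K g (c - t) l ->
  has_deriv_within [set x | K (c - x)] (fun x => g (c - x)) t (- l).
Proof. by move=> H; have := hd_refl _ _ _ _ c H; rewrite opprB addrC subrK. Qed.

Lemma hd_shift' K g t l c : has_deriv_within K g (t - c) l ->
  has_deriv_within [set x | K (x - c)] (fun x => g (x - c)) t l.
Proof. by move=> H; have := hd_shift _ _ _ _ c H; rewrite subrK. Qed.

Lemma hd_piece (p q : R) (Dk P : R -> R) t l (L : R) : (forall x, Icc p q x -> Dk x = P x) ->
  (Icc p q t -> has_deriv_within (Icc p q) P t L) -> (Icc p q t -> L = l) ->
  has_deriv_within (Icc p q) Dk t l.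
Proof.
move=> E H1 H2; have [Kt|nKt] := pselect (Icc p q t).
  by rewrite -H2 //; apply: hd_loc Kt E (H1 Kt).
apply: hd_out; case: (ltP t p) => tp; first by left.
case: (ltP q t) => qt; first by right.
by exfalso; apply: nKt; rewrite /Icc /= tp qt.
Qed.

Definition glue (T : R) (w1 w2 w3 w4 : nat -> R -> R) (k : nat) (t : R) : R :=
  if t <= T then w1 k t else if t <= 2 * T then (-1) ^+ k * w2 k (2 * T - t)
  else if t <= 3 * T then w3 k (t - 2 * T) else (-1) ^+ k * w4 k (4 * T - t).

Definition matching (T : R) (w1 w2 w3 w4 : nat -> R -> R) (k : nat) :=
  [/\ w1 k T = (-1) ^+ k * w2 k T, (-1) ^+ k * w2 k 0 = w3 k 0,
      w3 k T = (-1) ^+ k * w4 k T & w1 k 0 = (-1) ^+ k * w4 k 0].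

Lemma glue_E1 T w1 w2 w3 w4 k x : Icc 0 T x -> glue T w1 w2 w3 w4 k x = w1 k x.
Proof. by rewrite /glue /Icc /= => /andP[_ ->]. Qed.

Lemma glue_E2 T w1 w2 w3 w4 k x : 0 < T -> matching T w1 w2 w3 w4 k -> Icc T (2 * T) x ->
  glue T w1 w2 w3 w4 k x = (-1) ^+ k * w2 k (2 * T - x).
Proof.
move=> T0 [M1 _ _ _]; rewrite /glue /Icc /= => /andP[h1 h2].
case: ifP => h3; last by rewrite h2.
have -> : x = T by apply/eqP; rewrite eq_le h1 h3.
by rewrite M1; congr (_ * w2 k _); ring.
Qed.

Lemma glue_E3 T w1 w2 w3 w4 k x : 0 < T -> matching T w1 w2 w3 w4 k -> Icc (2 * T) (3 * T) x ->
  glue T w1 w2 w3 w4 k x = w3 k (x - 2 * T).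
Proof.
move=> T0 [_ M2 _ _]; rewrite /glue /Icc /= => /andP[h1 h2].
have -> : x <= T = false by apply/negbTE; rewrite -ltNge; lra.
case: ifP => h3; last by rewrite h2.
have -> : x = 2 * T by apply/eqP; rewrite eq_le h1 h3.
by rewrite subrr M2.
Qed.

Lemma glue_E4 T w1 w2 w3 w4 k x : 0 < T -> matching T w1 w2 w3 w4 k -> Icc (3 * T) (4 * T) x ->
  glue T w1 w2 w3 w4 k x = (-1) ^+ k * w4 k (4 * T - x).
Proof.
move=> T0 [_ _ M3 _]; rewrite /glue /Icc /= => /andP[h1 h2].
have -> : x <= T = false by apply/negbTE; rewrite -ltNge; lra.
have -> : x <= 2 * T = false by apply/negbTE; rewrite -ltNge; lra.
case: ifP => h3 //.
have -> : x = 3 * T by apply/eqP; rewrite eq_le h1 h3.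
have -> : 3 * T - 2 * T = T by ring.
by rewrite M3; congr (_ * w4 k _); ring.
Qed.

Lemma glue_P T w1 w2 w3 w4 k : 0 < T -> matching T w1 w2 w3 w4 k ->
  glue T w1 w2 w3 w4 k 0 = glue T w1 w2 w3 w4 k (4 * T).
Proof.
move=> T0 [_ _ _ M4]; rewrite /glue.
rewrite ltW //.
have -> : 4 * T <= T = false by apply/negbTE; rewrite -ltNge; lra.
have -> : 4 * T <= 2 * T = false by apply/negbTE; rewrite -ltNge; lra.
have -> : 4 * T <= 3 * T = false by apply/negbTE; rewrite -ltNge; lra.
by rewrite subrr.
Qed.

Arguments glue_E1 {T w1 w2 w3 w4 k x}.
Arguments glue_E2 {T w1 w2 w3 w4 k x}.
Arguments glue_E3 {T w1 w2 w3 w4 k x}.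
Arguments glue_E4 {T w1 w2 w3 w4 k x}.
Arguments glue_P {T w1 w2 w3 w4 k}.


Arguments hd_loc {K f g t l}.
Arguments hd_sub {K K' f t l}.
Arguments hd_U {K1 K2 f t l}.
Arguments hd_refl {K g t l} c.
Arguments hd_shift {K g t l} c.
Arguments hd_add {K f g t l1 l2}.
Arguments hd_scale {K f t l} a.
Arguments hd_refl' {K g t l} c.
Arguments hd_shift' {K g t l} c.
Arguments ac_refl {a b g} c.
Arguments ac_shift {a b g} c.
Arguments ac_scale {a b f} k.
Arguments ac_add {a b f g}.
Arguments ac_loc {a b f g}.

Lemma pd2 (T : R) (w : nat -> R -> R) k t c : (forall s, Icc 0 T s -> has_deriv_within (Icc 0 T) (w k) s (w k.+1 s)) ->
  Icc (c - T) c t -> has_deriv_within (Icc (c - T) c) (fun x => (-1) ^+ k * w k (c - x)) t ((-1) ^+ k.+1 * w k.+1 (c - t)).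
Proof.
move=> H Kt.
have K' : Icc 0 T (c - t) by move: Kt; rewrite /Icc /= => /andP[h1 h2]; apply/andP; split; lra.
have := hd_scale ((-1) ^+ k) (hd_refl' c (H _ K')).
rewrite exprS mulN1r mulrN -mulNr.
apply: hd_sub => x; rewrite /Icc /= => /andP[h1 h2]; apply/andP; split; lra.
Qed.

Lemma pd3 (T : R) (w : nat -> R -> R) k t c : (forall s, Icc 0 T s -> has_deriv_within (Icc 0 T) (w k) s (w k.+1 s)) ->
  Icc c (c + T) t -> has_deriv_within (Icc c (c + T)) (fun x => w k (x - c)) t (w k.+1 (t - c)).
Proof.
move=> H Kt.
have K' : Icc 0 T (t - c) by move: Kt; rewrite /Icc /= => /andP[h1 h2]; apply/andP; split; lra.
have := hd_shift' c (H _ K').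
apply: hd_sub => x; rewrite /Icc /= => /andP[h1 h2]; apply/andP; split; lra.
Qed.

Lemma pa2 (T : R) g c k : abs_cont 0 T g -> abs_cont (c - T) c (fun x => (-1) ^+ k * g (c - x)).
Proof. by move=> H; apply: ac_scale; have := ac_refl c H; rewrite subr0. Qed.

Lemma pa3 (T : R) g c : abs_cont 0 T g -> abs_cont c (c + T) (fun x => g (x - c)).
Proof. by move=> H; have := ac_shift c H; rewrite add0r addrC. Qed.

Lemma Icc4_split (T x : R) : 0 < T -> Icc 0 (4 * T) x ->
  ((Icc 0 T `|` Icc T (2 * T)) `|` (Icc (2 * T) (3 * T) `|` Icc (3 * T) (4 * T))) x.
Proof.
move=> T0; rewrite /Icc /= => /andP[h1 h2].
case: (leP x T) => h3; first by left; left; apply/andP.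
case: (leP x (2 * T)) => h4; first by left; right; apply/andP; split => //; lra.
case: (leP x (3 * T)) => h5; first by right; left; apply/andP; split => //; lra.
by right; right; apply/andP; split => //; lra.
Qed.

Lemma glue_W2n1 T n w1 w2 w3 w4 u1 u2 u3 u4 : 0 < T -> (0 < n)%N ->
  W2n1 0 T n u1 w1 -> W2n1 0 T n u2 w2 -> W2n1 0 T n u3 w3 -> W2n1 0 T n u4 w4 ->
  (forall k, (k < n.*2)%N -> matching T w1 w2 w3 w4 k) ->
  W2n1 0 (4 * T) n (glue T w1 w2 w3 w4 0) (glue T w1 w2 w3 w4).
Proof.
move=> T0 n0 [[_ D1] [_ A1]] [[_ D2] [_ A2]] [[_ D3] [_ A3]] [[_ D4] [_ A4]] M.
have mn : (n.*2.-1 < n.*2)%N by rewrite prednK // double_gt0.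
have e2 : 2 * T - T = T by ring.
have e3 : 2 * T + T = 3 * T by ring.
have e4 : 4 * T - T = 3 * T by ring.
apply: W2n1_mk; first split => // k kn t Kt.
  have kn1 : (k < n.*2)%N by apply: (ltn_trans kn).
  have kn2 : (k.+1 < n.*2)%N.
    by have := double_gt0 n; rewrite n0; move: kn; case: (n.*2) => // m.
  apply: (hd_sub (fun x => Icc4_split T x T0)); apply: hd_U; apply: hd_U.
  - apply: (hd_piece _ _ _ (w1 k)) => [x Kx|Kt'|Kt']; first exact: glue_E1.
      exact: D1.
    by rewrite (glue_E1 Kt').
  - apply: (hd_piece _ _ _ (fun x => (-1) ^+ k * w2 k (2 * T - x))) => [x Kx|Kt'|Kt'].
    + exact: (glue_E2 T0 (M k kn1) Kx).
    + by have := pd2 T w2 k t (2 * T) (D2 k kn); rewrite e2; apply.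
    + by rewrite (glue_E2 T0 (M _ kn2) Kt').
  - apply: (hd_piece _ _ _ (fun x => w3 k (x - 2 * T))) => [x Kx|Kt'|Kt'].
    + exact: (glue_E3 T0 (M k kn1) Kx).
    + by have := pd3 T w3 k t (2 * T) (D3 k kn); rewrite e3; apply.
    + by rewrite (glue_E3 T0 (M _ kn2) Kt').
  - apply: (hd_piece _ _ _ (fun x => (-1) ^+ k * w4 k (4 * T - x))) => [x Kx|Kt'|Kt'].
    + exact: (glue_E4 T0 (M k kn1) Kx).
    + by have := pd2 T w4 k t (4 * T) (D4 k kn); rewrite e4; apply.
    + by rewrite (glue_E4 T0 (M _ kn2) Kt').
have MM := M _ mn.
apply: (ac_glue 0 T); [exact: ltW|lra| |].
  by apply: (ac_loc _ A1) => x Kx; exact: glue_E1.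
apply: (ac_glue T (2 * T)); [lra|lra| |].
  have := pa2 T _ (2 * T) (n.*2.-1) A2; rewrite e2; apply: ac_loc => x Kx.
  exact: (glue_E2 T0 MM Kx).
apply: (ac_glue (2 * T) (3 * T)); [lra|lra| |].
  have := pa3 T _ (2 * T) A3; rewrite e3; apply: ac_loc => x Kx.
  exact: (glue_E3 T0 MM Kx).
have := pa2 T _ (4 * T) (n.*2.-1) A4; rewrite e4; apply: ac_loc => x Kx.
exact: (glue_E4 T0 MM Kx).
Qed.

Lemma mfun_shift (c : R) : measurable_fun [set: R] (fun x : R => x + c).
Proof. by apply: measurable_realfun.continuous_measurable_fun => x; apply: cvgD; [exact: cvg_id|exact: cvg_cst]. Qed.

Lemma lebesgue_measure_shift (c : R) (A : set R) : measurable A ->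
  (@lebesgue_measure R) ((fun x => x + c) @^-1` A) = (@lebesgue_measure R) A.
Proof.
move=> mA.
have := @lebesgue_measure_unique R (pushforward (@lebesgue_measure R) ((fun x : R => x + c) : _ -> measurableTypeR R)).
move=> H; symmetry; apply: H => //; first exact: mfun_shift.
move=> mf _ [[a b]] _ <-.
have E : (fun x : R => x + c) @^-1` `]a, b]%classic = `]a - c, b - c]%classic.
  apply/seteqP; split => x; rewrite /= !in_itv /= => /andP[h1 h2]; apply/andP; split; lra.
change (lebesgue_measure `]a, b]%classic = lebesgue_measure ((fun x : R => x + c) @^-1` `]a, b]%classic)).
rewrite E !lebesgue_measure_itv /= !lte_fin ltrD2r.
by case: ifP => // _; rewrite -!EFinD; congr EFin; ring.
Qed.

Lemma ae_shift (c : R) (P : R -> Prop) : {ae (@lebesgue_measure R), forall t, P t} ->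
  {ae (@lebesgue_measure R), forall t, P (t + c)}.
Proof.
case=> A [mA A0 PA]; exists ((fun x => x + c) @^-1` A); split.
- by rewrite -[X in measurable X]setTI; apply: mfun_shift.
- by rewrite lebesgue_measure_shift.
- by move=> t /= Pt; apply: PA.
Qed.

Lemma mfun_opp : measurable_fun [set: R] (fun x : R => - x).
Proof. by apply: measurable_realfun.continuous_measurable_fun => x; apply: cvgN; exact: cvg_id. Qed.

Lemma ae_opp (P : R -> Prop) : {ae (@lebesgue_measure R), forall t, P t} ->
  {ae (@lebesgue_measure R), forall t, P (- t)}.
Proof.
case=> A [mA A0 PA]; exists ((fun x => - x) @^-1` A); split.
- by rewrite -[X in measurable X]setTI; apply: mfun_opp.
- transitivity (pushforward (@lebesgue_measure R) (-%R : _ -> measurableTypeR R) A); first by [].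
  by rewrite lebesgue_measureN.
- by move=> t /= Pt; apply: PA.
Qed.

Lemma ae_refl (c : R) (P : R -> Prop) : {ae (@lebesgue_measure R), forall t, P t} ->
  {ae (@lebesgue_measure R), forall t, P (c - t)}.
Proof.
move=> /(ae_shift c) /ae_opp; apply: ae1 => t; by rewrite addrC.
Qed.

Lemma isd_refl (g : R -> R) (c t v k : R) : is_derive (c - t) 1 g v ->
  is_derive t 1 (fun x => k * g (c - x)) (k * - v).
Proof.
move=> H.
have H1 : is_derive t 1 (fun x : R => c - x) (-1).
  have := @is_deriveB _ _ _ (fun=> c) id t 1 0 1 _ _; rewrite sub0r; apply.
have H2 := @is_derive1_comp _ g (fun x => c - x) t v (-1) H H1.
have := @is_deriveZ _ _ _ (g \o (fun x => c - x)) k t 1 _ H2.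
by rewrite mulrN1.
Qed.

Lemma isd_shift (g : R -> R) (c t v : R) : is_derive (t - c) 1 g v ->
  is_derive t 1 (fun x => g (x - c)) v.
Proof.
move=> H.
have H1 : is_derive t 1 (fun x : R => x - c) 1.
  have := @is_deriveB _ _ _ id (fun=> c) t 1 1 0 _ _; rewrite subr0; apply.
have := @is_derive1_comp _ g (fun x => x - c) t v 1 H H1; by rewrite mulr1.
Qed.

Lemma near_lt (t b : R) : t < b -> \forall x \near t, x < b.
Proof.
move=> tb; apply/nbhs_normP; exists (b - t); first by rewrite /= subr_gt0.
move=> x; rewrite /ball_ /= ltr_norml => /andP[h1 h2]; lra.
Qed.

Lemma near_gt (t b : R) : b < t -> \forall x \near t, b < x.
Proof.
move=> tb; apply/nbhs_normP; exists (t - b); first by rewrite /= subr_gt0.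
move=> x; rewrite /ball_ /= ltr_norml => /andP[h1 h2]; lra.
Qed.

Lemma sgn2 (k : nat) : (-1) ^+ k * (-1) ^+ k = 1 :> R.
Proof. by rewrite -exprMn mulrNN mulr1 expr1n. Qed.

Lemma sgn_even (n : nat) : (-1) ^+ (n.*2) = 1 :> R.
Proof. by rewrite -signr_odd odd_double expr0. Qed.

Lemma ae_neq (c : R) : {ae (@lebesgue_measure R), forall t, t != c}.
Proof.
exists [set c]; split; first exact: measurable_set1.
  exact: lebesgue_measure_set1.
by move=> t /= /negP; rewrite negbK => /eqP ->.
Qed.

Lemma cf_1 (T : R) (a : nat -> R -> R) k t : 0 < T -> t <= T -> refl (2 * T) (refl T a) k t = a k t.
Proof. by move=> T0 h; rewrite /refl ifT ?h //; lra. Qed.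

Lemma cf_2 (T : R) (a : nat -> R -> R) k t : 0 < T -> T < t -> t <= 2 * T ->
  refl (2 * T) (refl T a) k t = (-1) ^+ k * a k (2 * T - t).
Proof. by move=> T0 h1 h2; rewrite /refl h2 ifF //; apply/negbTE; rewrite -ltNge. Qed.

Lemma cf_3 (T : R) (a : nat -> R -> R) k t : 0 < T -> 2 * T < t -> t < 3 * T ->
  refl (2 * T) (refl T a) k t = a k (t - 2 * T).
Proof.
move=> T0 h1 h2; rewrite /refl ifF; last by apply/negbTE; rewrite -ltNge.
rewrite ifF; last by apply/negbTE; rewrite -ltNge; lra.
rewrite mulrA sgn2 mul1r; congr (a k _); ring.
Qed.

Lemma cf_4 (T : R) (a : nat -> R -> R) k t : 0 < T -> 3 * T <= t ->
  refl (2 * T) (refl T a) k t = (-1) ^+ k * a k (4 * T - t).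
Proof.
move=> T0 h1; rewrite /refl ifF; last by apply/negbTE; rewrite -ltNge; lra.
rewrite ifT; last lra.
congr (_ * a k _); ring.
Qed.

Lemma glue_1 T w1 w2 w3 w4 k (t : R) : t <= T -> glue T w1 w2 w3 w4 k t = w1 k t.
Proof. by move=> h; rewrite /glue h. Qed.

Lemma glue_2 T w1 w2 w3 w4 k (t : R) : T < t -> t <= 2 * T ->
  glue T w1 w2 w3 w4 k t = (-1) ^+ k * w2 k (2 * T - t).
Proof. by move=> h1 h2; rewrite /glue ifF ?h2 //; apply/negbTE; rewrite -ltNge. Qed.

Lemma glue_3 T w1 w2 w3 w4 k (t : R) : 0 < T -> 2 * T < t -> t <= 3 * T ->
  glue T w1 w2 w3 w4 k t = w3 k (t - 2 * T).
Proof.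
move=> T0 h1 h2; rewrite /glue ifF; last by apply/negbTE; rewrite -ltNge; lra.
by rewrite ifF ?h2 //; apply/negbTE; rewrite -ltNge.
Qed.

Lemma glue_4 T w1 w2 w3 w4 k (t : R) : 0 < T -> 3 * T < t ->
  glue T w1 w2 w3 w4 k t = (-1) ^+ k * w4 k (4 * T - t).
Proof.
move=> T0 h1; rewrite /glue ifF; last by apply/negbTE; rewrite -ltNge; lra.
rewrite ifF; last by apply/negbTE; rewrite -ltNge; lra.
by rewrite ifF //; apply/negbTE; rewrite -ltNge.
Qed.

Lemma ae_and (P Q : R -> Prop) : {ae (@lebesgue_measure R), forall t, P t} ->
  {ae (@lebesgue_measure R), forall t, Q t} -> {ae (@lebesgue_measure R), forall t, P t /\ Q t}.
Proof. by move=> HP HQ; apply: (ae2 P Q) => // t p q; split. Qed.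

Arguments ae_refl c {P}.
Arguments ae_shift c {P}.
Arguments ae_opp {P}.
Arguments ae_and {P Q}.
Arguments ae1 {P S}.
Arguments ae2 {P Q S}.

Lemma isd_near_lt (f g : R -> R) (t v b : R) : t < b -> (forall x, x < b -> f x = g x) ->
  is_derive t 1 f v -> is_derive t 1 g v.
Proof.
move=> tb fg; apply: near_eq_is_derive.
near=> x; apply: fg; near: x; exact: near_lt tb.
Unshelve. all: by end_near. Qed.

Lemma isd_near_gt (f g : R -> R) (t v b : R) : b < t -> (forall x, b < x -> f x = g x) ->
  is_derive t 1 f v -> is_derive t 1 g v.
Proof.
move=> tb fg; apply: near_eq_is_derive.
near=> x; apply: fg; near: x; exact: near_gt tb.
Unshelve. all: by end_near. Qed.

Lemma isd_near_in (f g : R -> R) (t v a b : R) : a < t -> t < b -> (forall x, a < x -> x < b -> f x = g x) ->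
  is_derive t 1 f v -> is_derive t 1 g v.
Proof.
move=> ta tb fg; apply: near_eq_is_derive.
near=> x; apply: fg; near: x; [exact: near_gt ta|exact: near_lt tb].
Unshelve. all: by end_near. Qed.

Lemma glue_solves T n (a w1 w2 w3 w4 : nat -> R -> R) (s se : R -> R) : 0 < T -> (0 < n)%N ->
  solves 0 T n a w1 s -> solves 0 T n a w2 (fun _ => 0) -> solves 0 T n a w3 (fun _ => 0) ->
  solves 0 T n a w4 (fun _ => 0) ->
  (forall t, 0 <= t <= T -> se t = s t) -> (forall t, T < t -> se t = 0) ->
  solves 0 (4 * T) n (refl (2 * T) (refl T a)) (glue T w1 w2 w3 w4) se.
Proof.
move=> T0 n0 H1 H2 H3 H4 E1 E0.
have G2 := ae_refl (2 * T) H2; have G3 := ae_shift (- (2 * T)) H3; have G4 := ae_refl (4 * T) H4.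
have G5 := ae_neq T; have G6 := ae_neq (2 * T); have G7 := ae_neq (3 * T).
have mS : (n.*2.-1).+1 = n.*2 by rewrite prednK // double_gt0.
have sg : - (-1) ^+ (n.*2.-1) = 1 :> R by rewrite -mulN1r -exprS mS sgn_even.
apply: ae1 (ae_and H1 (ae_and G2 (ae_and G3 (ae_and G4 (ae_and G5 (ae_and G6 G7)))))).
move=> t [Q1 [Q2 [Q3 [Q4 [nT [n2T n3T]]]]]]; rewrite /Icc /= => /andP[t0 t4].
case: (ltP t T) => h1.
  have [v [Dv Ev]] := Q1 (ltac:(rewrite /Icc /= t0; exact: ltW)).
  exists v; split.
    apply: (isd_near_lt _ _ _ _ _ h1 _ Dv) => x hx.
    by rewrite glue_1 // ltW.
  rewrite E1; last by rewrite t0 ltW.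
  rewrite -Ev; congr (_ + _); apply: eq_bigr => k _.
  by rewrite cf_1 ?glue_1 // ltW.
have {h1}h1 : T < t by rewrite lt_neqAle eq_sym nT h1.
case: (ltP t (2 * T)) => h2.
  have [v [Dv Ev]] := Q2 (ltac:(rewrite /Icc /=; apply/andP; split; lra)).
  exists ((-1) ^+ (n.*2.-1) * - v); split.
    apply: (isd_near_in _ _ _ _ _ _ h1 h2 _ (isd_refl _ _ _ _ _ Dv)) => x hx1 hx2.
    by rewrite glue_2 // ltW.
  rewrite E0 // mulrN -mulNr sg mul1r -[X in _ = X]Ev; congr (_ + _); apply: eq_bigr => k _.
  by rewrite cf_2 ?glue_2 ?ltW // mulrACA sgn2 mul1r.
have {h2}h2 : 2 * T < t by rewrite lt_neqAle eq_sym n2T h2.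
case: (ltP t (3 * T)) => h3.
  have [v [Dv Ev]] := Q3 (ltac:(rewrite /Icc /=; apply/andP; split; lra)).
  exists v; split.
    apply: (isd_near_in _ _ _ _ _ _ h2 h3 _ (isd_shift _ _ _ _ Dv)) => x hx1 hx2.
    by rewrite glue_3 // ltW.
  rewrite E0; last lra.
  rewrite -[X in _ = X]Ev; congr (_ + _); apply: eq_bigr => k _.
  by rewrite cf_3 ?glue_3 ?ltW.
have {h3}h3 : 3 * T < t by rewrite lt_neqAle eq_sym n3T h3.
have [v [Dv Ev]] := Q4 (ltac:(rewrite /Icc /=; apply/andP; split; lra)).
exists ((-1) ^+ (n.*2.-1) * - v); split.
  apply: (isd_near_gt _ _ _ _ _ h3 _ (isd_refl _ _ _ _ _ Dv)) => x hx1.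
  by rewrite glue_4.
rewrite E0; last lra.
rewrite mulrN -mulNr sg mul1r -[X in _ = X]Ev; congr (_ + _); apply: eq_bigr => k _.
by rewrite cf_4 ?glue_4 ?ltW // mulrACA sgn2 mul1r.
Qed.

Lemma IccE (a b : R) : Icc a b = `[a, b]%classic.
Proof. by apply/seteqP; split => x; rewrite /Icc /= in_itv. Qed.

Lemma Icc_measurable (a b : R) : measurable (Icc a b).
Proof. by rewrite IccE; exact: measurable_itv. Qed.

Lemma cont_integrable (a b : R) (f : R -> R) : {within Icc a b, continuous f} ->
  (@lebesgue_measure R).-integrable (Icc a b) (EFin \o f).
Proof.
move=> H; apply: continuous_compact_integrable => //.
by rewrite IccE; exact: segment_compact.
Qed.

Lemma wcontM (A : set R) (f g : R -> R) : {within A, continuous f} -> {within A, continuous g} ->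
  {within A, continuous (fun x => f x * g x)}.
Proof.
move=> /subspace_continuousP Hf /subspace_continuousP Hg; apply/subspace_continuousP => x Ax.
exact: cvgM (Hf x Ax) (Hg x Ax).
Qed.

Lemma wcontD (A : set R) (f g : R -> R) : {within A, continuous f} -> {within A, continuous g} ->
  {within A, continuous (fun x => f x + g x)}.
Proof.
move=> /subspace_continuousP Hf /subspace_continuousP Hg; apply/subspace_continuousP => x Ax.
exact: cvgD (Hf x Ax) (Hg x Ax).
Qed.

Lemma wcontZ (A : set R) (f : R -> R) (c : R) : {within A, continuous f} ->
  {within A, continuous (fun x => c * f x)}.
Proof.
move=> /subspace_continuousP Hf; apply/subspace_continuousP => x Ax.
exact: cvgM (cvg_cst c) (Hf x Ax).
Qed.

Lemma pair_cvg (t0 s : R) : (fun s' : R => (t0, s')) @ nbhs s --> ((t0, s) : R * R).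
Proof. exact: (@cvg_pair _ _ _ _ (nbhs t0) (nbhs s) _ _ _ (fun=> t0) id (cvg_cst t0) cvg_id). Qed.

Lemma cont_section (b T t0 : R) (G : R -> R -> R) : T <= b -> Icc 0 T t0 ->
  {within [set p : R * R | Icc 0 b p.1 /\ Icc 0 b p.2], continuous (fun p : R * R => G p.1 p.2)} ->
  {within Icc 0 T, continuous (G t0)}.
Proof.
move=> Tb Kt0 /subspace_continuousP H; apply/subspace_continuousP => s Ks.
have Sq : Icc 0 b t0 /\ Icc 0 b s.
  by move: Kt0 Ks; rewrite /Icc /= => /andP[? ?] /andP[? ?]; split; apply/andP; split => //; lra.
have H1 := H (t0, s) Sq.
have Hg := pair_cvg t0 s.
apply: (cvg_trans _ H1) => P /=; rewrite !nbhs_filterE /= => HP.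
have := Hg _ HP; rewrite nbhs_filterE /= /within; apply: filterS => s' /= HS Ks'; apply: HS.
by move: Kt0 Ks'; rewrite /Icc /= => /andP[? ?] /andP[? ?]; split; apply/andP; split => //; lra.
Qed.

Lemma Icc_measurableL (a b : R) : measurable (Icc a b : set (measurableTypeR R)).
Proof. by rewrite IccE; exact: measurable_itv. Qed.

Lemma int_sq0 (T : R) (h : R -> R) : 0 < T -> {within Icc 0 T, continuous h} ->
  \int[@lebesgue_measure R]_(x in Icc 0 T) (h x * h x) = 0 -> forall s, Icc 0 T s -> h s = 0.
Proof.
move=> T0 hc I0 s0 Ks0; apply/eqP; apply/negPn/negP => hs0.
have e0 : 0 < `|h s0| / 2 by rewrite divr_gt0 // normr_gt0.
have := (subspace_continuousP _ _).1 hc s0 Ks0.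
move/cvgrPdist_lt => /(_ _ e0); rewrite near_withinE => /nbhs_normP [del del0 Hd].
have del20 : 0 < del / 2 by rewrite divr_gt0.
set al := Num.max 0 (s0 - del / 2); set be := Num.min T (s0 + del / 2).
have Hs0 : 0 <= s0 <= T by [].
have ab : al < be.
  rewrite /al /be maxEle minEle; move/andP: Hs0 => [h1 h2].
  by case: (leP 0 (s0 - del / 2)) => h3; case: (leP T (s0 + del / 2)) => h4; lra.
have Sub : Icc al be `<=` Icc 0 T.
  move=> y; rewrite /Icc /= /al /be maxEle minEle => /andP[h1 h2].
  move/andP: Hs0 => [h5 h6]; apply/andP.
  by case: (leP 0 (s0 - del / 2)) h1 => h3 h1; case: (leP T (s0 + del / 2)) h2 => h4 h2; split; lra.
have Bnd : forall y, Icc al be y -> (`|h s0| / 2) ^+ 2 <= h y * h y.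
  move=> y Ky; have Ky' := Sub _ Ky.
  have : `|s0 - y| < del.
    move: Ky; rewrite /Icc /= /al /be maxEle minEle => /andP[h1 h2].
    rewrite ltr_norml; apply/andP.
    by case: (leP 0 (s0 - del / 2)) h1 => h3 h1; case: (leP T (s0 + del / 2)) h2 => h4 h2; split; lra.
  move=> /(Hd y); rewrite /= /ball_ /= => /(_ Ky') /= H.
  have H2 : `|h s0| / 2 <= `|h y|.
    have := ler_normB (h s0) (h y).
    have := ler_normD (h s0 - h y) (h y); rewrite subrK.
    move: H; set A := `|h s0 - h y|; set B := `|h s0|; set C := `|h y|; lra.
  have E : h y * h y = `|h y| * `|h y| by rewrite -normrM ger0_norm // -expr2 sqr_ge0.
  rewrite E expr2; have := normr_ge0 (h s0); move: H2; set A := `|h s0|; set C := `|h y|; nra.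
have Ih : (@lebesgue_measure R).-integrable (Icc 0 T) (EFin \o (fun x => h x * h x)).
  by apply: cont_integrable; exact: wcontM.
have mh := measurable_int _ Ih.
have F0 : (\int[@lebesgue_measure R]_(x in Icc 0 T) (h x * h x)%:E = 0)%E.
  have := integrable_fin_num (Icc_measurableL 0 T) Ih.
  by rewrite /= => /fineK <-; move: I0; rewrite /Rintegral => ->.
have L1 : (\int[@lebesgue_measure R]_(x in Icc al be) (h x * h x)%:E <= 0)%E.
  rewrite -F0; apply: ge0_subset_integral => //; try exact: Icc_measurableL.
  by move=> x _; rewrite lee_fin -expr2 sqr_ge0.
have L2 : (\int[@lebesgue_measure R]_(x in Icc al be) (cst ((`|h s0| / 2) ^+ 2)%:E) x <=
   \int[@lebesgue_measure R]_(x in Icc al be) (h x * h x)%:E)%E.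
  apply: ge0_le_integral; [exact: Icc_measurableL | by move=> x _; rewrite lee_fin exprn_ge0 // divr_ge0
   | exact: measurable_cst | exact: (measurable_funS (Icc_measurableL 0 T) Sub mh)
   | by move=> x Kx; rewrite lee_fin; apply: Bnd].
move: L2; rewrite integral_cst; last exact: Icc_measurableL.
have M : (@lebesgue_measure R) (Icc al be) = (be - al)%:E.
  by rewrite IccE lebesgue_measure_itv /= lte_fin ab -EFinD.
move=> L2.
have L3 : (((`|h s0| / 2) ^+ 2 * (be - al))%:E <= \int[@lebesgue_measure R]_(x in Icc al be) (h x * h x)%:E)%E.
  by rewrite EFinM -M; exact: L2.
have := le_trans L3 L1; rewrite lee_fin.
have : 0 < (`|h s0| / 2) ^+ 2 * (be - al) by rewrite mulr_gt0 ?exprn_gt0 // subr_gt0.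
move=> ? ?; lra.
Qed.

Definition comb (e1 e2 e3 e4 : R) (dN dD dM1 dM2 : nat -> R -> R) : nat -> R -> R :=
  fun k t => 4^-1 * (e1 * dN k t + e2 * dD k t + e3 * dM1 k t + e4 * dM2 k t).

Lemma comb_W2n1 (a b : R) n e1 e2 e3 e4 dN dD dM1 dM2 uN uD uM1 uM2 :
  W2n1 a b n uN dN -> W2n1 a b n uD dD -> W2n1 a b n uM1 dM1 -> W2n1 a b n uM2 dM2 ->
  W2n1 a b n (comb e1 e2 e3 e4 dN dD dM1 dM2 0) (comb e1 e2 e3 e4 dN dD dM1 dM2).
Proof.
move=> [[_ D1] [_ A1]] [[_ D2] [_ A2]] [[_ D3] [_ A3]] [[_ D4] [_ A4]].
apply: W2n1_mk; first split => // k kn t Kt.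
  apply: hd_scale; apply: hd_add; [apply: hd_add; [apply: hd_add|]|]; apply: hd_scale.
  - exact: D1.
  - exact: D2.
  - exact: D3.
  - exact: D4.
apply: ac_scale; apply: ac_add; [apply: ac_add; [apply: ac_add|]|]; apply: ac_scale => //.
Qed.

Lemma solves_ext (a b : R) n (cf d : nat -> R -> R) (s1 s2 : R -> R) : (forall t, s1 t = s2 t) ->
  solves a b n cf d s1 -> solves a b n cf d s2.
Proof. by move=> E; apply: ae1 => t H Kt; rewrite -E; exact: H. Qed.

Lemma comb_solves (a b : R) n cf e1 e2 e3 e4 dN dD dM1 dM2 (s : R -> R) :
  solves a b n cf dN s -> solves a b n cf dD s -> solves a b n cf dM1 s -> solves a b n cf dM2 s ->
  solves a b n cf (comb e1 e2 e3 e4 dN dD dM1 dM2) (fun t => (4^-1 * (e1 + e2 + e3 + e4)) * s t).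
Proof.
move=> H1 H2 H3 H4.
apply: (solves_ext _ _ _ _ _ (fun t => 4^-1 * (e1 * s t + e2 * s t + e3 * s t + e4 * s t))).
  by move=> t; ring.
apply: solves_scale; apply: solves_add; [apply: solves_add; [apply: solves_add|]|]; exact: solves_scale.
Qed.

Lemma par_split n k : (k < n.*2)%N -> exists j, (j < n)%N /\ (k = j.*2 \/ k = j.*2.+1).
Proof.
move=> kn; exists k./2; split; first by rewrite ltn_half_double.
have := odd_double_half k; case: (odd k) => /= E; [right|left]; by rewrite -[in LHS]E.
Qed.

Lemma comb_matching T n (dN dD dM1 dM2 : nat -> R -> R) :
  BC_N 0 T n dN -> BC_D 0 T n dD -> BC_M1 0 T n dM1 -> BC_M2 0 T n dM2 ->
  forall k, (k < n.*2)%N -> matching T (comb 1 1 1 1 dN dD dM1 dM2) (comb 1 (-1) (-1) 1 dN dD dM1 dM2)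
    (comb 1 1 (-1) (-1) dN dD dM1 dM2) (comb 1 (-1) 1 (-1) dN dD dM1 dM2) k.
Proof.
move=> BN BD BM1 BM2 k /par_split [j [jn [->|->]]].
  have [N0 NT] := BN j jn; have [D0 DT] := BD j jn.
  have [M10 M1T] := BM1 j jn; have [M20 M2T] := BM2 j jn.
  rewrite /matching /comb sgn_even DT M1T D0 M20.
  by split; ring.
have [N0 NT] := BN j jn; have [D0 DT] := BD j jn.
have [M10 M1T] := BM1 j jn; have [M20 M2T] := BM2 j jn.
rewrite /matching /comb exprS sgn_even mulr1 N0 NT M10 M2T.
by split; ring.
Qed.

Lemma pt_in (T : R) (g : R -> R) x : Icc 0 T x -> (g \_ (Icc 0 T)) x = g x.
Proof. by move=> h; rewrite patchE mem_set. Qed.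

Lemma pt_out (T : R) (g : R -> R) x : T < x -> (g \_ (Icc 0 T)) x = 0.
Proof.
move=> h; rewrite patchE memNset //; rewrite /Icc /= => /andP[_ h2]; lra.
Qed.

Lemma int_restrict4 (T : R) (g : R -> R) : 0 < T ->
  (@lebesgue_measure R).-integrable (Icc 0 T) (EFin \o g) ->
  (@lebesgue_measure R).-integrable (Icc 0 (4 * T)) (EFin \o (g \_ (Icc 0 T))).
Proof.
move=> T0 Hg; rewrite -restrict_EFin.
apply/(integrable_restrict _ (Icc_measurableL 0 T) (Icc_measurableL 0 (4 * T))).
have -> : Icc 0 (4 * T) `&` Icc 0 T = Icc 0 T.
  apply/seteqP; split => x; rewrite /Icc /=; first by case.
  move=> /andP[h1 h2]; split; apply/andP; split => //; lra.
exact: Hg.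
Qed.

Lemma Rint_restrict4 (T : R) (f g : R -> R) : 0 < T ->
  \int[@lebesgue_measure R]_(x in Icc 0 (4 * T)) (f x * (g \_ (Icc 0 T)) x) =
  \int[@lebesgue_measure R]_(x in Icc 0 T) (f x * g x).
Proof.
move=> T0.
have E : Icc 0 (4 * T) `&` Icc 0 T = Icc 0 T.
  apply/seteqP; split => x; rewrite /Icc /=; first by case.
  move=> /andP[h1 h2]; split; apply/andP; split => //; lra.
transitivity (\int[@lebesgue_measure R]_(x in Icc 0 (4 * T) `&` Icc 0 T) (f x * g x)); last by rewrite E.
rewrite Rintegral_mkcondr; apply: eq_Rintegral => x _.
rewrite !patchE; case: ifP => _ //=.
by have -> : (point : R) = 0 by []; rewrite mulr0.
Qed.

Arguments int_restrict4 {T g}.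
Arguments comb_W2n1 {a b n} e1 e2 e3 e4 {dN dD dM1 dM2 uN uD uM1 uM2}.
Arguments comb_matching {T n dN dD dM1 dM2}.
Arguments glue_W2n1 {T n w1 w2 w3 w4 u1 u2 u3 u4}.
Arguments glue_solves {T n a w1 w2 w3 w4 s se}.
Arguments comb_solves {a b n cf} e1 e2 e3 e4 {dN dD dM1 dM2 s}.
Arguments solves_ext {a b n cf d s1 s2}.
Arguments W2n1_add {a b n u1 u2 d1 d2}.
Arguments W2n1_scale {a b n u d} c.
Arguments solves_add {a b n cf d1 d2 s1 s2}.
Arguments solves_scale {a b n cf d s} k.

Lemma key (n : nat) (T : R) (a : nat -> R -> R) (GN GD GM1 GM2 GP : R -> R -> R) (sg : R -> R) :
  (0 < n)%N -> 0 < T ->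
  nonresonant 0 (4 * T) n (refl (2 * T) (refl T a)) (@BC_P R) ->
  is_green 0 T n a (@BC_N R) GN -> is_green 0 T n a (@BC_D R) GD ->
  is_green 0 T n a (@BC_M1 R) GM1 -> is_green 0 T n a (@BC_M2 R) GM2 ->
  is_green 0 (4 * T) n (refl (2 * T) (refl T a)) (@BC_P R) GP ->
  (@lebesgue_measure R).-integrable (Icc 0 T) (EFin \o sg) ->
  forall t, Icc 0 T t ->
  \int[@lebesgue_measure R]_(s in Icc 0 (4 * T)) (GP t s * (sg \_ (Icc 0 T)) s) =
  4^-1 * (1 * \int[@lebesgue_measure R]_(s in Icc 0 T) (GN t s * sg s)
        + 1 * \int[@lebesgue_measure R]_(s in Icc 0 T) (GD t s * sg s)
        + 1 * \int[@lebesgue_measure R]_(s in Icc 0 T) (GM1 t s * sg s)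
        + 1 * \int[@lebesgue_measure R]_(s in Icc 0 T) (GM2 t s * sg s)).
Proof.
move=> n0 T0 NR [_ gN] [_ gD] [_ gM1] [_ gM2] [_ gP] Ig t Kt.
have [dN [WN [BN SN]]] := gN _ Ig.
have [dD [WD [BD SD]]] := gD _ Ig.
have [dM1 [WM1 [BM1 SM1]]] := gM1 _ Ig.
have [dM2 [WM2 [BM2 SM2]]] := gM2 _ Ig.
have [dP [WP [BP SP]]] := gP _ (int_restrict4 T0 Ig).
set w1 := comb 1 1 1 1 dN dD dM1 dM2.
set w2 := comb 1 (-1) (-1) 1 dN dD dM1 dM2.
set w3 := comb 1 1 (-1) (-1) dN dD dM1 dM2.
set w4 := comb 1 (-1) 1 (-1) dN dD dM1 dM2.
have W1 := comb_W2n1 1 1 1 1 WN WD WM1 WM2.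
have W2 := comb_W2n1 1 (-1) (-1) 1 WN WD WM1 WM2.
have W3 := comb_W2n1 1 1 (-1) (-1) WN WD WM1 WM2.
have W4 := comb_W2n1 1 (-1) 1 (-1) WN WD WM1 WM2.
have M := comb_matching BN BD BM1 BM2.
have WU := glue_W2n1 T0 n0 W1 W2 W3 W4 M.
have S1 : solves 0 T n a w1 sg.
  by apply: (solves_ext _ (comb_solves 1 1 1 1 SN SD SM1 SM2)) => x; field.
have S2 : solves 0 T n a w2 (fun _ => 0).
  by apply: (solves_ext _ (comb_solves 1 (-1) (-1) 1 SN SD SM1 SM2)) => x; field.
have S3 : solves 0 T n a w3 (fun _ => 0).
  by apply: (solves_ext _ (comb_solves 1 1 (-1) (-1) SN SD SM1 SM2)) => x; field.
have S4 : solves 0 T n a w4 (fun _ => 0).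
  by apply: (solves_ext _ (comb_solves 1 (-1) 1 (-1) SN SD SM1 SM2)) => x; field.
have SU := glue_solves T0 n0 S1 S2 S3 S4 (fun x hx => pt_in T sg x hx) (fun x hx => pt_out T sg x hx).
have WD' := W2n1_add WP (W2n1_scale (-1) WU).
have SD' := solves_add SP (solves_scale (-1) SU).
have SD0 : solves 0 (4 * T) n (refl (2 * T) (refl T a)) (fun k x => dP k x + -1 * glue T w1 w2 w3 w4 k x) (fun _ => 0).
  by apply: (solves_ext _ SD') => x; ring.
have BD' : BC_P 0 (4 * T) n (fun k x => dP k x + -1 * glue T w1 w2 w3 w4 k x).
  by move=> k kn; rewrite /= (BP k kn) (glue_P T0 (M k kn)).
have := NR _ _ WD' BD' SD0 t (ltac:(move: Kt; rewrite /Icc /= => /andP[? ?]; apply/andP; split => //; lra)).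
have tT : t <= T by move: Kt; rewrite /Icc /= => /andP[].
rewrite glue_1 // /w1 /comb.
rewrite (WN.1.1 t Kt) (WD.1.1 t Kt) (WM1.1.1 t Kt) (WM2.1.1 t Kt) /=.
move=> H; apply/eqP; rewrite -subr_eq0; apply/eqP; rewrite -[RHS]H; ring.
Qed.


End S.

Arguments cont_integrable {R a b f}.
Arguments key {R n T a GN GD GM1 GM2 GP sg}.
Arguments int_sq0 {R T h}.
Arguments wcontM {R A f g}.
Arguments wcontD {R A f g}.
Arguments wcontZ {R A f} c.

Theorem mainTheorem5 (R : realType) (n : nat) (T alpha : R)
    (a : nat -> R -> R) (GN GD GM1 GM2 GP : R -> R -> R) :
  (0 < n)%N -> 0 < T -> 1 <= alpha ->
  (forall k, (k < n.*2)%N -> Lalpha 0 T alpha (a k)) ->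
  nonresonant 0 T n a (@BC_N R) ->
  nonresonant 0 T n a (@BC_D R) ->
  nonresonant 0 T n a (@BC_M1 R) ->
  nonresonant 0 T n a (@BC_M2 R) ->
  nonresonant 0 (2 * T) n (refl T a) (@BC_N R) ->
  nonresonant 0 (2 * T) n (refl T a) (@BC_D R) ->
  nonresonant 0 (4 * T) n (refl (2 * T) (refl T a)) (@BC_P R) ->
  is_green 0 T n a (@BC_N R) GN ->
  is_green 0 T n a (@BC_D R) GD ->
  is_green 0 T n a (@BC_M1 R) GM1 ->
  is_green 0 T n a (@BC_M2 R) GM2 ->
  is_green 0 (4 * T) n (refl (2 * T) (refl T a)) (@BC_P R) GP ->
  forall t s, Icc 0 T t -> Icc 0 T s ->
    GP t s = (GN t s + GD t s + GM1 t s + GM2 t s) / 4.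
Proof.
move=> n0 T0 _ _ _ _ _ _ _ _ NR gN gD gM1 gM2 gP t s Kt Ks.
have T4 : T <= 4 * T by lra.
have cN := cont_section T T t GN (lexx T) Kt gN.1.
have cD := cont_section T T t GD (lexx T) Kt gD.1.
have cM1 := cont_section T T t GM1 (lexx T) Kt gM1.1.
have cM2 := cont_section T T t GM2 (lexx T) Kt gM2.1.
have cP := cont_section (4 * T) T t GP T4 Kt gP.1.
pose h := fun x => GP t x + (- 4^-1) * (GN t x + GD t x + GM1 t x + GM2 t x).
have ch : {within Icc 0 T, continuous h}.
  by apply: wcontD => //; apply: wcontZ; apply: wcontD => //; apply: wcontD => //; apply: wcontD.
have Ih := cont_integrable ch.
have K := key n0 T0 NR gN gD gM1 gM2 gP Ih t Kt.
rewrite Rint_restrict4 // in K.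
have mD := Icc_measurableL 0 T.
have IM (G : R -> R) : {within Icc 0 T, continuous G} ->
    (@lebesgue_measure R).-integrable (Icc 0 T) (EFin \o (fun x => G x * h x)).
  by move=> cG; apply: cont_integrable; exact: wcontM.
have I2 : \int[@lebesgue_measure R]_(x in Icc 0 T) (h x * h x) = 0.
  transitivity (\int[@lebesgue_measure R]_(x in Icc 0 T) (GP t x * h x + (- 4^-1) *
     (((GN t x * h x + GD t x * h x) + GM1 t x * h x) + GM2 t x * h x))).
    by apply: eq_Rintegral => x _; rewrite /h; ring.
  rewrite RintegralD //; last first.
  - apply: cont_integrable; apply: wcontZ; apply: wcontD; [apply: wcontD; [apply: wcontD|]|];
      exact: wcontM.
  - exact: IM.
  rewrite RintegralZl //; last first.
    apply: cont_integrable; apply: wcontD; [apply: wcontD; [apply: wcontD|]|]; exact: wcontM.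
  rewrite RintegralD //; last 2 first.
  - apply: cont_integrable; apply: wcontD; [apply: wcontD|]; exact: wcontM.
  - exact: IM.
  rewrite RintegralD //; last 2 first.
  - apply: cont_integrable; apply: wcontD; exact: wcontM.
  - exact: IM.
  rewrite RintegralD //; [|exact: IM|exact: IM].
  rewrite K; ring.
have hs := int_sq0 T0 ch I2 s Ks.
apply/eqP; rewrite -subr_eq0; apply/eqP; rewrite -hs /h; ring.
Qed.
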